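(* Let $(X,\Sigma,\mu)$ be a measure space, $n\ge1$, $\mathbb{F}\in\{\mathbb{R},\mathbb{C}\}$, and $T:L^2(X,\mu;\mathbb{F}^n)\to\mathbb{F}$ a non-zero linear form. Suppose $\dim L^2(X,\mu;\mathbb{F})\ge n$. Then for every $d\in\mathbb{F}\setminus\{0\}$, the set $\mathcal{F}^{\mathbb{F}}_{(X,\mu),n}\cap T^{-1}(\{d\})$ is dense in $T^{-1}(\{d\})$ (for the norm of $L^2(X,\mu;\mathbb{F}^n)$).
   Context: A family $\Phi=(\varphi_x)_{x\in X}$ in $\mathbb{F}^n$ (with measurable coordinates) is a continuous frame indexed by $(X,\mu)$ if there are $0<A\le B$ with $A\|v\|^2\le\int_X|\langle v,\varphi_x\rangle|^2d\mu(x)\le B\|v\|^2$ for all $v\in\mathbb{F}^n$. $\mathcal{F}^{\mathbb{F}}_{(X,\mu),n}$ denotes the set of such frames, viewed as a subset of $L^2(X,\mu;\mathbb{F}^n)$ (equivalently, the elements of $L^2(X,\mu;\mathbb{F}^n)$ whose coordinate functions are linearly independent in $L^2(X,\mu;\mathbb{F})$). *)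

(* Defs.v *)
From HB Require Import structures.
From mathcomp Require Import all_boot all_order all_algebra.
From mathcomp Require Import all_classical all_reals all_analysis.
From mathcomp Require Import complex.
Set Implicit Arguments. Unset Strict Implicit. Unset Printing Implicit Defensive.
Import Order.TTheory GRing.Theory Num.Theory.
Local Open Scope ring_scope.
Local Open Scope classical_set_scope.

(* A scalar field F in {R, C}, presented through its real and imaginary
   parts and its conjugation (used for measurability, moduli and the
   Hermitian inner product on F^n). *)
Record scalars (R : realType) := Scalars {
  sc_K :> fieldType;
  sc_re : sc_K -> R;
  sc_im : sc_K -> R;
  sc_conj : sc_K -> sc_K }.

Definition realF (R : realType) : scalars R :=
  @Scalars R R id (fun _ => 0) id.

Definition complexF (R : realType) : scalars R :=
  @Scalars R (complex.complex (R : realFieldType) : fieldType) (@complex.Re R) (@complex.Im R) (@complex.conjc R).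

Section L2.
Context (R : realType) (F : scalars R).
Context (d : measure_display) (X : measurableType d)
        (mu : {measure set X -> \bar R}).

Definition abs2 (z : F) : R := sc_re z ^+ 2 + sc_im z ^+ 2.

Definition L2scal (f : X -> F) : Prop :=
  measurable_fun setT (fun x => sc_re (f x)) /\
  measurable_fun setT (fun x => sc_im (f x)) /\
  (\int[mu]_x (abs2 (f x))%:E < +oo)%E.

Definition vnorm2 (n : nat) (v : 'rV[F]_n) : R := \sum_(i < n) abs2 (v ord0 i).

Definition vdot (n : nat) (v w : 'rV[F]_n) : F :=
  \sum_(i < n) v ord0 i * sc_conj (w ord0 i).

(* representatives of elements of L^2(X, mu; F^n) *)
Definition L2vec (n : nat) (f : X -> 'rV[F]_n) : Prop :=
  forall i : 'I_n, L2scal (fun x => f x ord0 i).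

Definition L2dist2 (n : nat) (f g : X -> 'rV[F]_n) : \bar R :=
  \int[mu]_x (vnorm2 (f x - g x))%:E.

Definition is_cont_frame (n : nat) (phi : X -> 'rV[F]_n) : Prop :=
  L2vec phi /\
  exists A B : R, 0 < A /\ A <= B /\
    forall v : 'rV[F]_n,
      ((A * vnorm2 v)%:E <= \int[mu]_x (abs2 (vdot v (phi x)))%:E)%E /\
      (\int[mu]_x (abs2 (vdot v (phi x)))%:E <= (B * vnorm2 v)%:E)%E.

(* T is a linear form on L^2(X, mu; F^n) (given on representatives; it is
   required to be compatible with equality mu-a.e.) *)
Definition L2_linear_form (n : nat) (T : (X -> 'rV[F]_n) -> F) : Prop :=
  (forall f g, L2vec f -> L2vec g -> {ae mu, forall x, f x = g x} -> T f = T g) /\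
  (forall (a : F) f g, L2vec f -> L2vec g ->
     T (fun x => a *: f x + g x) = a * T f + T g).

Definition L2_nonzero_form (n : nat) (T : (X -> 'rV[F]_n) -> F) : Prop :=
  exists f, L2vec f /\ T f != 0.

Definition L2_dim_ge (n : nat) : Prop :=
  exists h : 'I_n -> X -> F,
    (forall i, L2scal (h i)) /\
    forall c : 'I_n -> F,
      {ae mu, forall x, \sum_(i < n) c i * h i x = 0} -> forall i, c i = 0.

Definition frames_dense_in_fiber (n : nat) (T : (X -> 'rV[F]_n) -> F) (c : F) : Prop :=
  forall f, L2vec f -> T f = c ->
    forall e : R, 0 < e ->
      exists g, is_cont_frame g /\ T g = c /\ (L2dist2 f g < (e ^+ 2)%:E)%E.

End L2.

Definition corollary6p1_for (R : realType) (F : scalars R) : Prop :=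
  forall (d : measure_display) (X : measurableType d)
         (mu : {measure set X -> \bar R}) (n : nat)
         (T : (X -> 'rV[F]_n) -> F),
    (1 <= n)%N ->
    L2_linear_form mu T ->
    L2_nonzero_form mu T ->
    L2_dim_ge F mu n ->
    forall c : F, c != 0 -> frames_dense_in_fiber mu T c.

(* Main.v *)
Require Import Defs.
From mathcomp Require Import all_boot all_order all_algebra.
From mathcomp Require Import all_classical all_reals all_analysis.
From mathcomp Require Import complex.
From mathcomp Require Import ring lra.
Set Implicit Arguments. Unset Strict Implicit. Unset Printing Implicit Defensive.
Import Order.TTheory GRing.Theory Num.Theory.
Local Open Scope ring_scope.
From mathcomp Require Import measurable_realfun.
Lemma eig_free (F : fieldType) n k (v : 'I_k -> 'rV[F]_n) (lam : 'I_k -> F) :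
  injective lam -> (forall j, v j != 0) ->
  (forall c : 'I_k -> F, \sum_j c j *: v j = 0 -> \sum_j (c j * lam j) *: v j = 0) ->
  forall c : 'I_k -> F, \sum_j c j *: v j = 0 -> forall j, c j = 0.
Proof.
elim: k v lam => [|k IH] v lam ilam vn0 hcl c hc j; first by case: j.
have lw : forall i : 'I_k, lift ord_max i = widen_ord (leqnSn k) i.
  by move=> i; apply: val_inj; exact: lift_max.
pose w := fun i : 'I_k => v (widen_ord (leqnSn k) i).
pose l := fun i : 'I_k => lam (widen_ord (leqnSn k) i).
have il : injective l.
  by move=> a b /ilam/(congr1 val) /= /val_inj.
have wn0 : forall i, w i != 0 by move=> i; exact: vn0.
have hcl' : forall dd : 'I_k -> F, \sum_i dd i *: w i = 0 ->
    \sum_i (dd i * l i) *: w i = 0.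
  move=> dd hd.
  pose de := fun j : 'I_k.+1 => if unlift ord_max j is Some i then dd i else 0.
  have e1 : forall i, de (widen_ord (leqnSn k) i) = dd i.
    by move=> i; rewrite /de -lw liftK.
  have e2 : de ord_max = 0 by rewrite /de unlift_none.
  have := hcl de; rewrite !big_ord_recr /= e2 !mul0r !scale0r !addr0.
  under eq_bigr do rewrite e1.
  move=> /(_ hd).
  by under eq_bigr do rewrite e1.
pose c' := fun i : 'I_k => c (widen_ord (leqnSn k) i) * (l i - lam ord_max).
have hc' : \sum_i c' i *: w i = 0.
  have e : \sum_j (c j * (lam j - lam ord_max)) *: v j = 0.
    have -> : \sum_j (c j * (lam j - lam ord_max)) *: v j =
      \sum_j (c j * lam j) *: v j - lam ord_max *: \sum_j c j *: v j.
      rewrite scaler_sumr -sumrB; apply: eq_bigr => i _.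
      by rewrite scalerA mulrBr scalerBl [lam ord_max * _]mulrC.
    by rewrite hcl // hc scaler0 subr0.
  by move: e; rewrite big_ord_recr /= subrr mulr0 scale0r addr0.
have hz := IH w l il wn0 hcl' c' hc'.
have cw : forall i, c (widen_ord (leqnSn k) i) = 0.
  move=> i; have := hz i; rewrite /c' => /eqP; rewrite mulf_eq0 subr_eq0.
  case/orP => [/eqP //|/eqP h].
  have := ilam _ _ h => /(congr1 val) /= hv.
  by have := ltn_ord i; rewrite hv ltnn.
have cm : c ord_max = 0.
  move: hc; rewrite big_ord_recr /= big1 ?add0r; last first.
    by move=> i _; rewrite cw scale0r.
  move/eqP; rewrite scaler_eq0 (negbTE (vn0 _)) orbF.
  by move/eqP.
by case: (unliftP ord_max j) => [i ->|->] //; rewrite lw cw.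
Qed.
Section MatrixLemma.
Context (R : realType).

Definition qf m (M : 'M[R]_m) (u w : 'rV[R]_m) : R := (u *m M *m w^T) 0 0.
Definition nrm2 m (w : 'rV[R]_m) : R := (w *m w^T) 0 0.

Lemma nrm2E m (w : 'rV[R]_m) : nrm2 w = \sum_j w 0 j ^+ 2.
Proof. by rewrite /nrm2 mxE; apply: eq_bigr => j _; rewrite mxE expr2. Qed.

Lemma nrm2_ge0 m (w : 'rV[R]_m) : 0 <= nrm2 w.
Proof. by rewrite nrm2E sumr_ge0 // => j _; rewrite sqr_ge0. Qed.

Lemma sq_le_nrm2 m (w : 'rV[R]_m) j : w 0 j ^+ 2 <= nrm2 w.
Proof.
rewrite nrm2E (bigD1 j) //= lerDl sumr_ge0 // => i _; exact: sqr_ge0.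
Qed.

Lemma qfE m M (u w : 'rV[R]_m) :
  qf M u w = \sum_j \sum_l u 0 j * M j l * w 0 l.
Proof.
rewrite /qf mxE; under eq_bigr do rewrite !mxE mulr_suml.
rewrite exchange_big /=; apply: eq_bigr => j _; apply: eq_bigr => l _.
by [].
Qed.

Lemma qf_bound m (M : 'M[R]_m) (w : 'rV[R]_m) :
  `|qf M w w| <= (\sum_j \sum_l `|M j l|) * nrm2 w.
Proof.
rewrite qfE (le_trans (ler_norm_sum _ _ _)) // mulr_suml ler_sum // => j _.
rewrite (le_trans (ler_norm_sum _ _ _)) // mulr_suml ler_sum // => l _.
rewrite !normrM.
have h1 := sq_le_nrm2 w j; have h2 := sq_le_nrm2 w l.
have a0 := normr_ge0 (w 0 j); have b0 := normr_ge0 (w 0 l).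
have c0 := normr_ge0 (M j l).
rewrite -real_normK ?num_real // in h1; rewrite -real_normK ?num_real // in h2.
have : `|w 0 j| * `|w 0 l| <= nrm2 w by nra.
move=> h; rewrite [`|w 0 j| * _]mulrC -mulrA; apply: ler_wpM2l => //.
Qed.

Lemma qfDl m M (u v w : 'rV[R]_m) : qf M (u + v) w = qf M u w + qf M v w.
Proof. by rewrite /qf !mulmxDl mxE. Qed.
Lemma qfZl m M a (u w : 'rV[R]_m) : qf M (a *: u) w = a * qf M u w.
Proof. by rewrite /qf -!scalemxAl mxE. Qed.
Lemma qfDr m M (u v w : 'rV[R]_m) : qf M w (u + v) = qf M w u + qf M w v.
Proof. by rewrite /qf linearD /= mulmxDr mxE. Qed.
Lemma qfZr m M a (u w : 'rV[R]_m) : qf M w (a *: u) = a * qf M w u.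
Proof. by rewrite /qf linearZ /= -scalemxAr mxE. Qed.
Lemma qf_sym m (M : 'M[R]_m) u w : M^T = M -> qf M w u = qf M u w.
Proof.
move=> sM; rewrite /qf.
have -> : u *m M *m w^T = (w *m M *m u^T)^T by rewrite !trmx_mul trmxK sM mulmxA.
by rewrite [RHS]mxE.
Qed.
Lemma qf0r m (M : 'M[R]_m) u : qf M u 0 = 0.
Proof. by rewrite /qf linear0 mulmx0 mxE. Qed.
Lemma qf0l m (M : 'M[R]_m) u : qf M 0 u = 0.
Proof. by rewrite /qf !mul0mx mxE. Qed.

Lemma qf_CS m (M : 'M[R]_m) u w : M^T = M ->
  (forall w, w != 0 -> 0 < qf M w w) ->
  qf M u w ^+ 2 <= qf M u u * qf M w w.
Proof.
move=> sM pd.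
have psd : forall w, 0 <= qf M w w.
  by move=> z; have [->|/pd/ltW//] := eqVneq z 0; rewrite qf0r.
have [->|wn0] := eqVneq w 0; first by rewrite qf0r expr0n /= mulr_ge0.
have c0 := pd _ wn0.
set a := qf M u u; set b := qf M u w; set c := qf M w w.
have := psd (u + (- b / c) *: w).
rewrite qfDl !qfDr !qfZl !qfZr !(qf_sym u w sM) -/a -/b -/c.
have cn0 : c != 0 by rewrite gt_eqF.
move=> h.
have : 0 <= c * (a + - b / c * b + (- b / c * b + - b / c * (- b / c * c))).
  by rewrite mulr_ge0 //; exact: ltW.
have -> : c * (a + - b / c * b + (- b / c * b + - b / c * (- b / c * c)))
   = a * c - b ^+ 2 by field.
lra.
Qed.

Lemma pd_lower m (M : 'M[R]_m) : M^T = M ->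
  (forall w, w != 0 -> 0 < qf M w w) ->
  exists A, 0 < A /\ forall w, A * nrm2 w <= qf M w w.
Proof.
move=> sM pd.
have psd : forall w, 0 <= qf M w w.
  by move=> z; have [->|/pd/ltW//] := eqVneq z 0; rewrite qf0r.
have uM : M \in unitmx.
  rewrite unitmxE unitfE; apply/negP => /det0P [v vn0 vM0].
  by have := pd v vn0; rewrite /qf vM0 mul0mx mxE ltxx.
set N := invmx M.
set C := \sum_j \sum_l `|(N^T) j l|.
have C0 : 0 <= C by rewrite sumr_ge0 // => j _; rewrite sumr_ge0.
exists (C + 1)^-1; split; first by rewrite invr_gt0; lra.
move=> w.
set u := w *m N.
have hb : qf M u w = nrm2 w.
  by rewrite /qf /u -(mulmxA w N M) mulVmx // mulmx1.
have ha : qf M u u = qf N^T w w.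
  rewrite /qf /u trmx_mul -(mulmxA w N M) mulVmx // mulmx1 mulmxA //.
have cs := qf_CS u w sM pd.
rewrite hb ha in cs.
have hP := qf_bound N^T w.
have P1 : qf N^T w w <= C * nrm2 w by rewrite (le_trans (ler_norm _)).
set S := nrm2 w in cs hP P1 *.
set q := qf M w w in cs *.
have S0 : 0 <= S by exact: nrm2_ge0.
have q0 : 0 <= q by exact: psd.
suff : S <= (C + 1) * q.
  move=> h; rewrite ler_pdivrMl; last lra. by [].
have [S00|Spos] := eqVneq S 0; first by rewrite S00 mulr_ge0 //; lra.
have Sp : 0 < S by rewrite lt_neqAle eq_sym Spos S0.
have : S * S <= (C * q) * S by nra.
rewrite ler_pM2r // => h; nra.
Qed.

Lemma qf_upper m (M : 'M[R]_m) :
  exists B, 0 <= B /\ forall w, qf M w w <= B * nrm2 w.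
Proof.
exists (\sum_j \sum_l `|M j l|); split.
  by rewrite sumr_ge0 // => j _; rewrite sumr_ge0.
by move=> w; rewrite (le_trans (ler_norm _)) // qf_bound.
Qed.

End MatrixLemma.
Section Scal.
Context (R : realType) (F : scalars R) (ofR : R -> F).
Local Notation re := (@sc_re R F).
Local Notation im := (@sc_im R F).
Local Notation cj := (@sc_conj R F).
Context (reD : forall a b : F, re (a + b) = re a + re b)
        (imD : forall a b : F, im (a + b) = im a + im b)
        (reM : forall a b : F, re (a * b) = re a * re b - im a * im b)
        (imM : forall a b : F, im (a * b) = re a * im b + im a * re b)
        (reC : forall a : F, re (cj a) = re a)
        (imC : forall a : F, im (cj a) = - im a)
        (eqF : forall a b : F, re a = re b -> im a = im b -> a = b)
        (re_ofR : forall r, re (ofR r) = r)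
        (im_ofR : forall r, im (ofR r) = 0).

Lemma re0 : re 0 = 0. Proof. have := reD 0 0; rewrite addr0; lra. Qed.
Lemma im0 : im 0 = 0. Proof. have := imD 0 0; rewrite addr0; lra. Qed.
Lemma reN (a : F) : re (- a) = - re a.
Proof. have := reD a (- a); rewrite subrr re0; lra. Qed.
Lemma imN (a : F) : im (- a) = - im a.
Proof. have := imD a (- a); rewrite subrr im0; lra. Qed.
Lemma re_sum I (s : seq I) (P : pred I) (f : I -> F) :
  re (\sum_(i <- s | P i) f i) = \sum_(i <- s | P i) re (f i).
Proof. exact: (big_morph re reD re0). Qed.
Lemma im_sum I (s : seq I) (P : pred I) (f : I -> F) :
  im (\sum_(i <- s | P i) f i) = \sum_(i <- s | P i) im (f i).
Proof. exact: (big_morph im imD im0). Qed.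

Lemma cjD (a b : F) : cj (a + b) = cj a + cj b.
Proof. apply: eqF; rewrite ?reD ?imD ?reC ?imC ?reD ?imD; lra. Qed.
Lemma cjM (a b : F) : cj (a * b) = cj a * cj b.
Proof. apply: eqF; rewrite ?reM ?imM ?reC ?imC ?reM ?imM ?reC ?imC; lra. Qed.
Lemma cjK (a : F) : cj (cj a) = a.
Proof. by apply: eqF; rewrite ?reC ?imC ?opprK. Qed.
Lemma cj0 : cj 0 = 0.
Proof. by apply: eqF; rewrite ?reC ?imC ?re0 ?im0 ?oppr0. Qed.
Lemma cjN (a : F) : cj (- a) = - cj a.
Proof. apply: eqF; first by rewrite reC !reN reC. by rewrite imC !imN imC. Qed.
Lemma cj_ofR r : cj (ofR r) = ofR r.
Proof. by apply: eqF; rewrite ?reC ?imC ?im_ofR ?oppr0. Qed.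
Lemma cj_sum I (s : seq I) (P : pred I) (f : I -> F) :
  cj (\sum_(i <- s | P i) f i) = \sum_(i <- s | P i) cj (f i).
Proof. exact: (big_morph cj cjD cj0). Qed.
Lemma ofR_inj : injective ofR.
Proof. by move=> r s /(congr1 re); rewrite !re_ofR. Qed.

Lemma abs2_ge0 (a : F) : 0 <= abs2 a.
Proof. by rewrite /abs2 addr_ge0 // sqr_ge0. Qed.
Lemma abs2M (a b : F) : abs2 (a * b) = abs2 a * abs2 b.
Proof. rewrite /abs2 reM imM; ring. Qed.
Lemma abs2N (a : F) : abs2 (- a) = abs2 a.
Proof. by rewrite /abs2 reN imN !sqrrN. Qed.
Lemma abs2D_le (a b : F) : abs2 (a + b) <= 2 * (abs2 a + abs2 b).
Proof.
rewrite /abs2 reD imD.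
have := sqr_ge0 (re a - re b); have := sqr_ge0 (im a - im b); nra.
Qed.
Lemma abs2_eq0 (a : F) : abs2 a = 0 -> a = 0.
Proof.
rewrite /abs2 => h.
have h1 : re a = 0 by nra.
have h2 : im a = 0 by nra.
by apply: eqF; rewrite ?re0 ?im0.
Qed.
Lemma abs2_ofR r : abs2 (ofR r) = r ^+ 2.
Proof. by rewrite /abs2 re_ofR im_ofR expr0n /= addr0. Qed.
Lemma abs2C (a : F) : abs2 (cj a) = abs2 a.
Proof. by rewrite /abs2 reC imC sqrrN. Qed.
Lemma re2_le (a : F) : re a ^+ 2 <= abs2 a.
Proof. by rewrite /abs2 lerDl sqr_ge0. Qed.
Lemma im2_le (a : F) : im a ^+ 2 <= abs2 a.
Proof. by rewrite /abs2 lerDr sqr_ge0. Qed.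

Lemma vdotZD n (v y z : 'rV[F]_n) (a : F) :
  vdot v (a *: y + z) = cj a * vdot v y + vdot v z.
Proof.
rewrite /vdot mulr_sumr -big_split /=; apply: eq_bigr => i _.
by rewrite !mxE cjD cjM; ring.
Qed.

Lemma vdot_mulmx k n (c : 'rV[F]_k) (V : 'M[F]_(k, n)) (y : 'rV[F]_n) :
  vdot (c *m V) y = \sum_j c 0 j * vdot (row j V) y.
Proof.
rewrite /vdot; under eq_bigr do rewrite mxE mulr_suml.
rewrite exchange_big /=; apply: eq_bigr => j _; rewrite mulr_sumr.
by apply: eq_bigr => i _; rewrite mxE mulrA.
Qed.

Definition rco n (v : 'rV[F]_n) : 'rV[R]_(n + n) :=
  row_mx (map_mx re v) (map_mx im v).
Definition ps2 n (v : 'rV[F]_n) : 'rV[R]_(n + n) :=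
  row_mx (- map_mx im v) (map_mx re v).
Definition rdot m (u w : 'rV[R]_m) : R := \sum_j u 0 j * w 0 j.

Lemma rdot_row_mx n1 n2 (a c : 'rV[R]_n1) (b e : 'rV[R]_n2) :
  rdot (row_mx a b) (row_mx c e) = rdot a c + rdot b e.
Proof. by rewrite /rdot big_split_ord /=; congr (_ + _); apply: eq_bigr => i _;
  rewrite ?row_mxEl ?row_mxEr. Qed.

Lemma re_vdot n (v y : 'rV[F]_n) : re (vdot v y) = rdot (rco v) (rco y).
Proof.
rewrite /rco rdot_row_mx /rdot re_sum -big_split /=; apply: eq_bigr => i _.
by rewrite !mxE reM reC imC; ring.
Qed.
Lemma im_vdot n (v y : 'rV[F]_n) : im (vdot v y) = rdot (rco v) (ps2 y).
Proof.
rewrite /rco /ps2 rdot_row_mx /rdot im_sum -big_split /=; apply: eq_bigr => i _.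
by rewrite !mxE imM reC imC; ring.
Qed.
Lemma abs2_vdot n (v y : 'rV[F]_n) :
  abs2 (vdot v y) = rdot (rco v) (rco y) ^+ 2 + rdot (rco v) (ps2 y) ^+ 2.
Proof. by rewrite /abs2 re_vdot im_vdot. Qed.
Lemma vnorm2_rco n (v : 'rV[F]_n) : vnorm2 v = nrm2 (rco v).
Proof.
rewrite nrm2E /rco big_split_ord /= /vnorm2 -big_split /=; apply: eq_bigr => i _.
by rewrite row_mxEl row_mxEr !mxE.
Qed.


Context (d : measure_display) (X : measurableType d)
        (mu : {measure set X -> \bar R}).

Definition L2R (p : X -> R) := measurable_fun setT p /\
  mu.-integrable setT (fun x => (p x ^+ 2)%:E).

Lemma int_ge0_fin (f : X -> R) : (forall x, 0 <= f x) ->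
  mu.-integrable setT (fun x => (f x)%:E) -> (\int[mu]_x (f x)%:E < +oo)%E.
Proof.
move=> f0 /integrableP [_]; rewrite (_ : (fun x => _) = (fun x => (f x)%:E)) //.
by apply: funext => x; rewrite abse_EFin ger0_norm.
Qed.

Lemma int_of_fin (f : X -> R) : measurable_fun setT f -> (forall x, 0 <= f x) ->
  (\int[mu]_x (f x)%:E < +oo)%E -> mu.-integrable setT (fun x => (f x)%:E).
Proof.
move=> mf f0 fi; apply/integrableP; split; first exact/measurable_EFinP.
rewrite (_ : (fun x => _) = (fun x => (f x)%:E)) //.
by apply: funext => x; rewrite abse_EFin ger0_norm.
Qed.

Lemma mabs2 (u : X -> F) : measurable_fun setT (fun x => re (u x)) ->
  measurable_fun setT (fun x => im (u x)) ->
  measurable_fun setT (fun x => abs2 (u x)).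
Proof.
move=> h1 h2; rewrite /abs2.
by apply: measurable_funD; apply: measurable_funX.
Qed.

Lemma L2scal_int (u : X -> F) : L2scal mu u ->
  mu.-integrable setT (fun x => (abs2 (u x))%:E).
Proof.
move=> [h1 [h2 h3]]; apply: int_of_fin => //; last by move=> x; exact: abs2_ge0.
exact: mabs2.
Qed.

Lemma L2scal_comb (a : F) (u w : X -> F) : L2scal mu u -> L2scal mu w ->
  L2scal mu (fun x => a * u x + w x).
Proof.
move=> hu hw; have [u1 [u2 u3]] := hu; have [w1 [w2 w3]] := hw.
have m1 : measurable_fun setT (fun x => re (a * u x + w x)).
  rewrite (_ : (fun x => _) = (fun x => (re a * re (u x) - im a * im (u x)) + re (w x))); last first.
    by apply: funext => x; rewrite reD reM.
  apply: measurable_funD => //; apply: measurable_funB.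
    exact: measurable_funM.
  exact: measurable_funM.
have m2 : measurable_fun setT (fun x => im (a * u x + w x)).
  rewrite (_ : (fun x => _) = (fun x => (re a * im (u x) + im a * re (u x)) + im (w x))); last first.
    by apply: funext => x; rewrite imD imM.
  apply: measurable_funD => //; apply: measurable_funD.
    exact: measurable_funM.
  exact: measurable_funM.
split => //; split => //.
apply: int_ge0_fin; first by move=> x; exact: abs2_ge0.
apply: (@le_integrable _ _ _ mu setT measurableT _
   (fun x => ((2 * abs2 a) * abs2 (u x) + 2 * abs2 (w x))%:E)).
- by apply/measurable_EFinP; exact: mabs2.
- move=> x _; rewrite !abse_EFin lee_fin !ger0_norm ?abs2_ge0 //.
  + rewrite (le_trans (abs2D_le _ _)) // abs2M; lra.
  + by rewrite addr_ge0 // mulr_ge0 // ?mulr_ge0 // abs2_ge0.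
- rewrite (_ : (fun x => _) = (fun x => ((2 * abs2 a)%:E * (abs2 (u x))%:E) + ((2%:R)%:E * (abs2 (w x))%:E))%E); last first.
    by apply: funext => x; rewrite EFinD !EFinM.
  apply: (@integrableD _ _ _ mu setT measurableT); apply: integrableZl => //;
  exact: L2scal_int.
Qed.

Lemma L2R_re (u : X -> F) : L2scal mu u -> L2R (fun x => re (u x)).
Proof.
move=> hu; have [u1 [u2 u3]] := hu; split => //.
apply: (@le_integrable _ _ _ mu setT measurableT _ (fun x => (abs2 (u x))%:E)).
- by apply/measurable_EFinP; exact: measurable_funX.
- by move=> x _; rewrite !abse_EFin lee_fin !ger0_norm ?abs2_ge0 ?sqr_ge0 // re2_le.
- exact: L2scal_int.
Qed.

Lemma L2R_im (u : X -> F) : L2scal mu u -> L2R (fun x => im (u x)).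
Proof.
move=> hu; have [u1 [u2 u3]] := hu; split => //.
apply: (@le_integrable _ _ _ mu setT measurableT _ (fun x => (abs2 (u x))%:E)).
- by apply/measurable_EFinP; exact: measurable_funX.
- by move=> x _; rewrite !abse_EFin lee_fin !ger0_norm ?abs2_ge0 ?sqr_ge0 // im2_le.
- exact: L2scal_int.
Qed.

Lemma L2R_N (p : X -> R) : L2R p -> L2R (fun x => - p x).
Proof.
move=> [h1 h2]; split; first exact: measurableT_comp.
by under eq_fun do rewrite sqrrN.
Qed.

Lemma L2R_mul (p q : X -> R) : L2R p -> L2R q ->
  mu.-integrable setT (fun x => (p x * q x)%:E).
Proof.
move=> [p1 p2] [q1 q2].
apply: (@le_integrable _ _ _ mu setT measurableT _
   (fun x => ((p x ^+ 2)%:E + (q x ^+ 2)%:E)%E)).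
- by apply/measurable_EFinP; exact: measurable_funM.
- move=> x _; rewrite -EFinD !abse_EFin lee_fin [X in _ <= X]ger0_norm;
    last by rewrite addr_ge0 // sqr_ge0.
  rewrite normrM.
  have := sqr_ge0 (`|p x| - `|q x|).
  rewrite -[p x ^+ 2]real_normK ?num_real // -[q x ^+ 2]real_normK ?num_real //.
  nra.
- exact: (@integrableD _ _ _ mu setT measurableT).
Qed.

Lemma L2R_row_mx n1 n2 (a : X -> 'rV[R]_n1) (b : X -> 'rV[R]_n2) :
  (forall i, L2R (fun x => a x 0 i)) -> (forall i, L2R (fun x => b x 0 i)) ->
  forall j, L2R (fun x => row_mx (a x) (b x) 0 j).
Proof.
move=> ha hb j; rewrite -[j]splitK; case: (fintype.split j) => k /=.
  by under eq_fun do rewrite row_mxEl.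
by under eq_fun do rewrite row_mxEr.
Qed.

Lemma L2R_rco n (phi : X -> 'rV[F]_n) : L2vec mu phi ->
  forall j, L2R (fun x => rco (phi x) 0 j).
Proof.
move=> hp; apply: L2R_row_mx => i.
  by under eq_fun do rewrite mxE; exact: L2R_re.
by under eq_fun do rewrite mxE; exact: L2R_im.
Qed.

Lemma L2R_ps2 n (phi : X -> 'rV[F]_n) : L2vec mu phi ->
  forall j, L2R (fun x => ps2 (phi x) 0 j).
Proof.
move=> hp; apply: L2R_row_mx => i.
  under eq_fun do rewrite !mxE; exact/L2R_N/L2R_im.
by under eq_fun do rewrite mxE; exact: L2R_re.
Qed.

Lemma mrdot m (w : 'rV[R]_m) (psi : X -> 'rV[R]_m) :
  (forall j, measurable_fun setT (fun x => psi x 0 j)) ->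
  measurable_fun setT (fun x => rdot w (psi x)).
Proof.
move=> h; rewrite /rdot.
apply: (@measurable_sum _ _ _ _ _ _ (fun j x => w 0 j * psi x 0 j)) => j.
exact: measurable_funM.
Qed.

Definition gram m (psi : X -> 'rV[R]_m) : 'M[R]_m :=
  \matrix_(j, l) fine (\int[mu]_x (psi x 0 j * psi x 0 l)%:E).

Lemma gram_sym m (psi : X -> 'rV[R]_m) : (gram psi)^T = gram psi.
Proof.
apply/matrixP => j l; rewrite !mxE; congr fine.
by apply: eq_integral => x _; rewrite mulrC.
Qed.

Lemma int_rdot2 m (psi : X -> 'rV[R]_m) (w : 'rV[R]_m) :
  (forall j, L2R (fun x => psi x 0 j)) ->
  (\int[mu]_x ((rdot w (psi x)) ^+ 2)%:E = (qf (gram psi) w w)%:E)%E.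
Proof.
move=> hp.
have hint : forall j l, mu.-integrable setT (fun x => (psi x 0 j * psi x 0 l)%:E).
  by move=> j l; apply: L2R_mul.
have e1 : forall x, ((rdot w (psi x)) ^+ 2)%:E = (\sum_j \sum_l
     ((w 0 j * w 0 l)%:E * (psi x 0 j * psi x 0 l)%:E))%E.
  move=> x; rewrite /rdot expr2 mulr_suml -sumEFin; apply: eq_bigr => j _.
  rewrite mulr_sumr -sumEFin; apply: eq_bigr => l _; rewrite -EFinM.
  by congr EFin; ring.
under eq_integral => x _ do rewrite e1.
rewrite integral_sum //; last first.
  move=> j; apply: (@integrable_sum _ _ _ mu setT measurableT) => l _.
  exact: integrableZl.
rewrite qfE -sumEFin; apply: eq_bigr => j _.
rewrite integral_sum //; last by move=> l; exact: integrableZl.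
rewrite -sumEFin; apply: eq_bigr => l _.
rewrite integralZl // mxE.
set I := (\int[mu]_x _)%E.
have fk : I = (fine I)%:E by rewrite fineK //; exact: integrable_fin_num.
by rewrite [in LHS]fk -EFinM; congr EFin; ring.
Qed.

Lemma qfDM m (M1 M2 : 'M[R]_m) w : qf (M1 + M2) w w = qf M1 w w + qf M2 w w.
Proof. by rewrite /qf mulmxDr mulmxDl mxE. Qed.

Context (coordAx : forall n (w : 'rV[R]_(n + n)), w != 0 ->
  exists v : 'rV[F]_n, v != 0 /\ forall y,
    abs2 (vdot v y) <= rdot w (rco y) ^+ 2 + rdot w (ps2 y) ^+ 2).

Lemma frame_of_indep n (phi : X -> 'rV[F]_n) : L2vec mu phi ->
  (forall v, v != 0 -> ~ {ae mu, forall x, vdot v (phi x) = 0}) ->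
  is_cont_frame mu phi.
Proof.
move=> hphi hind.
pose psi1 := fun x => rco (phi x); pose psi2 := fun x => ps2 (phi x).
have h1 : forall j, L2R (fun x => psi1 x 0 j) := L2R_rco hphi.
have h2 : forall j, L2R (fun x => psi2 x 0 j) := L2R_ps2 hphi.
pose M := gram psi1 + gram psi2.
have sM : M^T = M by rewrite /M linearD /= !gram_sym.
have mQ1 : forall w, measurable_fun setT (fun x => rdot w (psi1 x) ^+ 2).
  by move=> w; apply: measurable_funX; apply: mrdot => j; case: (h1 j).
have mQ2 : forall w, measurable_fun setT (fun x => rdot w (psi2 x) ^+ 2).
  by move=> w; apply: measurable_funX; apply: mrdot => j; case: (h2 j).
have mQ : forall w, measurable_fun setT
    (fun x => rdot w (psi1 x) ^+ 2 + rdot w (psi2 x) ^+ 2).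
  by move=> w; apply: measurable_funD.
have key : forall w, (\int[mu]_x ((rdot w (psi1 x)) ^+ 2 + (rdot w (psi2 x)) ^+ 2)%:E
    = (qf M w w)%:E)%E.
  move=> w; under eq_integral => x _ do rewrite EFinD.
  rewrite integralD //.
  - by rewrite !int_rdot2 // qfDM EFinD.
  - apply: int_of_fin => //; first by move=> x; exact: sqr_ge0.
    by rewrite int_rdot2 // ltry.
  - apply: int_of_fin => //; first by move=> x; exact: sqr_ge0.
    by rewrite int_rdot2 // ltry.
have keyv : forall v, (\int[mu]_x (abs2 (vdot v (phi x)))%:E
    = (qf M (rco v) (rco v))%:E)%E.
  by move=> v; rewrite -key; apply: eq_integral => x _; rewrite abs2_vdot.
have mabs : forall v, measurable_fun setT (fun x => abs2 (vdot v (phi x))).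
  by move=> v; under eq_fun do rewrite abs2_vdot; exact: mQ.
have posI : forall v, v != 0 -> (0 < \int[mu]_x (abs2 (vdot v (phi x)))%:E)%E.
  move=> v vn0; rewrite lt0e integral_ge0 ?andbT; last first.
    by move=> x _; rewrite lee_fin abs2_ge0.
  apply/negP => /eqP h0; apply: (hind v vn0).
  have : (\int[mu]_x `|(abs2 (vdot v (phi x)))%:E| = 0)%E.
    rewrite -h0; apply: eq_integral => x _.
    by rewrite abse_EFin ger0_norm // abs2_ge0.
  move/(ae_eq_integral_abs mu measurableT (proj2 (measurable_EFinP _ _) (mabs v))).
  apply: filterS => x /(_ I) /= h; apply: abs2_eq0.
  by case: h.
have pd : forall w, w != 0 -> 0 < qf M w w.
  move=> w wn0; have [v [vn0 hv]] := coordAx wn0.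
  rewrite -lte_fin -key; apply: (lt_le_trans (posI v vn0)).
  apply: ge0_le_integral => //.
  - by move=> x _; rewrite lee_fin abs2_ge0.
  - exact/measurable_EFinP/mabs.
  - exact/measurable_EFinP/mQ.
  - by move=> x _; rewrite lee_fin; exact: hv.
have [A [A0 hA]] := pd_lower sM pd.
have [B [B0 hB]] := qf_upper M.
split => //; exists A, (A + B); split => //; split; first lra.
move=> v; rewrite keyv !lee_fin vnorm2_rco; split; first exact: hA.
rewrite (le_trans (hB _)) // ler_wpM2r ?nrm2_ge0 //; lra.
Qed.

Lemma vdot_sumZ n k (cc : 'I_k -> F) (V : 'I_k -> 'rV[F]_n) (y : 'rV[F]_n) :
  vdot (\sum_j cc j *: V j) y = \sum_j cc j * vdot (V j) y.
Proof.
rewrite /vdot; under eq_bigr do rewrite summxE mulr_suml.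
rewrite exchange_big /=; apply: eq_bigr => j _; rewrite mulr_sumr.
by apply: eq_bigr => i _; rewrite mxE mulrA.
Qed.

Lemma vdot0 n (y : 'rV[F]_n) : vdot 0 y = 0.
Proof. by rewrite /vdot big1 // => i _; rewrite mxE mul0r. Qed.

Lemma L2vec_comb n (a : F) (f g : X -> 'rV[F]_n) : L2vec mu f -> L2vec mu g ->
  L2vec mu (fun x => a *: f x + g x).
Proof.
move=> hf hg i.
under eq_fun do rewrite !mxE.
exact: L2scal_comb.
Qed.

Theorem main_generic n (T : (X -> 'rV[F]_n) -> F) :
  (1 <= n)%N -> L2_linear_form mu T -> L2_nonzero_form mu T ->
  L2_dim_ge F mu n -> forall c : F, c != 0 -> frames_dense_in_fiber mu T c.
Proof.
move=> _ [Tae Tlin] _ [h [hL2 hind]] c cn0 f hf Tf e e0.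
pose H := fun x => (\row_i h i x : 'rV[F]_n).
have HL2 : L2vec mu H.
  by move=> i; rewrite /H; under eq_fun do rewrite mxE; exact: hL2.
pose kap := T H / c.
pose K := fun x => (- kap) *: f x + H x.
have KL2 : L2vec mu K := L2vec_comb _ hf HL2.
have TK : T K = 0.
  by rewrite /K Tlin // Tf /kap mulNr divfK // addNr.
have Tg : forall a, T (fun x => a *: K x + f x) = c.
  by move=> a; rewrite Tlin // TK mulr0 add0r.
have gL2 : forall a, L2vec mu (fun x => a *: K x + f x).
  by move=> a; exact: L2vec_comb.
have mK : measurable_fun setT (fun x => vnorm2 (K x)).
  rewrite /vnorm2.
  apply: (@measurable_sum _ _ _ _ _ _ (fun i x => abs2 (K x 0 i))) => i.
  by have [k1 [k2 _]] := KL2 i; exact: mabs2.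
pose IKe := (\int[mu]_x (vnorm2 (K x))%:E)%E.
have IKfin : (IKe < +oo)%E.
  rewrite /IKe /vnorm2; under eq_integral do rewrite -sumEFin.
  rewrite ge0_integral_sum //.
  - apply: lte_sum_pinfty => i _; apply: int_ge0_fin.
      by move=> x; exact: abs2_ge0.
    exact: L2scal_int.
  - move=> i; apply/measurable_EFinP.
    by have [k1 [k2 _]] := KL2 i; exact: mabs2.
  - by move=> i x _; rewrite lee_fin abs2_ge0.
have IKe0 : (0 <= IKe)%E.
  by apply: integral_ge0 => x _; rewrite lee_fin sumr_ge0 // => i _; exact: abs2_ge0.
pose IK := fine IKe.
have IK0 : 0 <= IK by exact: fine_ge0.
have IKE : IKe = IK%:E by rewrite fineK // ge0_fin_numE.
have dist : forall a, L2dist2 mu f (fun x => a *: K x + f x) = (abs2 a * IK)%:E.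
  move=> a; rewrite /L2dist2.
  have ev : forall x, vnorm2 (f x - (a *: K x + f x)) = abs2 a * vnorm2 (K x).
    move=> x; rewrite /vnorm2 mulr_sumr; apply: eq_bigr => i _; rewrite !mxE.
    by rewrite opprD addrCA subrr addr0 abs2N abs2M.
  under eq_integral do rewrite ev EFinM.
  rewrite ge0_integralZl_EFin //.
  - by rewrite -/IKe IKE -EFinM.
  - by move=> x _; rewrite lee_fin sumr_ge0 // => i _; exact: abs2_ge0.
  - exact/measurable_EFinP.
  - exact: abs2_ge0.
pose dl := e / ((n.+1)%:R * (IK + 1)).
have dl0 : 0 < dl by rewrite /dl divr_gt0 // mulr_gt0 // ltr_pwDr.
pose eps := fun j : 'I_n.+1 => ofR (dl * (j.+1)%:R).
have small : forall j, abs2 (eps j) * IK < e ^+ 2.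
  move=> j; rewrite abs2_ofR.
  set r := dl * (j.+1)%:R.
  have r0 : 0 < r by rewrite /r mulr_gt0.
  have hN : 0 < (n.+1)%:R :> R by [].
  have hjn : (j.+1)%:R <= (n.+1)%:R :> R by rewrite ler_nat ltn_ord.
  have rb : r * (IK + 1) <= e.
    have -> : r * (IK + 1) = e * ((j.+1)%:R / (n.+1)%:R).
      rewrite /r /dl; field.
      have IK1 : 0 < IK + 1 by lra.
      by rewrite addrC natr1 (gt_eqF hN) /= gt_eqF.
    apply: ler_piMr; first exact: ltW.
    by rewrite ler_pdivrMr // mul1r.
  have h1 : r ^+ 2 * IK < (r * (IK + 1)) ^+ 2 by nra.
  have h2 : (r * (IK + 1)) ^+ 2 <= e ^+ 2.
    have h3 : 0 <= r * (IK + 1) by rewrite mulr_ge0 ?ltW //; lra.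
    nra.
  lra.
have good : exists j, forall v, v != 0 ->
    ~ {ae mu, forall x, vdot v (eps j *: K x + f x) = 0}.
  apply: contrapT => hn.
  have hall : forall j, exists v, v != 0 /\
      {ae mu, forall x, vdot v (eps j *: K x + f x) = 0}.
    move=> j; apply: contrapT => hv; apply: hn; exists j => v vn0 hae.
    by apply: hv; exists v; split.
  have [V hV] := choice hall.
  pose ck := cj kap.
  have expand : forall (a : R) v x, vdot v (ofR a *: K x + f x) =
      (1 - ofR a * ck) * vdot v (f x) + ofR a * vdot v (H x).
    move=> a v x; rewrite vdotZD cj_ofR /K vdotZD cjN /ck; ring.
  have Binj : forall v, {ae mu, forall x, vdot v (H x) = 0} -> v = 0.
    move=> v hv.
    have hc : forall i, cj (v 0 i) = 0.
      apply: hind; apply: filterS hv => x hx.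
      have : cj (vdot v (H x)) = 0 by rewrite hx cj0.
      rewrite /vdot cj_sum => h0; rewrite -[RHS]h0; apply: eq_bigr => i _.
      by rewrite cjM cjK /H mxE.
    by apply/rowP => i; rewrite mxE -(cjK (v 0 i)) hc cj0.
  have epsn0 : forall j, eps j != 0.
    move=> j; apply/negP => /eqP h0.
    have := congr1 re h0; rewrite re_ofR re0 => /eqP.
    by rewrite mulf_eq0 (gt_eqF dl0) /= pnatr_eq0.
  have alpha : forall j, 1 - eps j * ck != 0.
    move=> j; apply/negP => /eqP ha.
    have [vn0 hae] := hV j.
    have : V j = 0.
      apply: Binj; apply: filterS hae => x; rewrite expand ha mul0r add0r.
      by move/eqP; rewrite mulf_eq0 (negbTE (epsn0 j)) /= => /eqP.
    by move/eqP; rewrite (negbTE vn0).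
  pose lam := fun j => eps j / (1 - eps j * ck).
  have rel : forall j, {ae mu, forall x,
      vdot (V j) (f x) + lam j * vdot (V j) (H x) = 0}.
    move=> j; have [_ hae] := hV j; apply: filterS hae => x; rewrite expand => hx.
    have aj := alpha j.
    have -> : vdot (V j) (f x) + lam j * vdot (V j) (H x) =
      ((1 - eps j * ck) * vdot (V j) (f x) + eps j * vdot (V j) (H x)) /
      (1 - eps j * ck) by rewrite /lam; field.
    by rewrite hx mul0r.
  have ilam : injective lam.
    move=> j1 j2 hl.
    have e12 : eps j1 = eps j2.
      move/eqP: hl; rewrite /lam eqr_div ?alpha // => /eqP h'.
      apply/eqP; rewrite -subr_eq0.
      have -> : eps j1 - eps j2 = eps j1 * (1 - eps j2 * ck) -
        eps j2 * (1 - eps j1 * ck) by ring.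
      by rewrite h' subrr.
    move/ofR_inj: e12 => /(mulfI (negbT (gt_eqF dl0))) /eqP.
    by rewrite eqr_nat eqSS => /eqP /val_inj.
  have hcl : forall cc : 'I_n.+1 -> F, \sum_j cc j *: V j = 0 ->
      \sum_j (cc j * lam j) *: V j = 0.
    move=> cc hcc; apply: Binj.
    have hall' : {ae mu, forall x, forall j,
        vdot (V j) (f x) + lam j * vdot (V j) (H x) = 0}.
      exact: filter_forall.
    apply: filterS hall' => x hx.
    rewrite vdot_sumZ.
    have e0' : \sum_j cc j * vdot (V j) (f x) = 0 by rewrite -vdot_sumZ hcc vdot0.
    have h2 : \sum_j cc j * (vdot (V j) (f x) + lam j * vdot (V j) (H x)) = 0.
      by apply: big1 => j _; rewrite hx mulr0.
    rewrite (eq_bigr (fun j => cc j * vdot (V j) (f x) +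
      (cc j * lam j) * vdot (V j) (H x))) in h2; last first.
      by move=> j _; rewrite mulrDr mulrA.
    by rewrite big_split /= e0' add0r in h2.
  pose Vm := \matrix_(j, i) V j 0 i : 'M[F]_(n.+1, n).
  have nrf : ~~ row_free Vm.
    rewrite /row_free; apply/negP => /eqP hr.
    by have := rank_leq_col Vm; rewrite hr ltnn.
  move: nrf; rewrite -kermx_eq0 => kn0.
  have [i ri] : exists i, row i (kermx Vm) != 0.
    apply: contrapT => hh; move/negP: kn0; apply; apply/eqP/row_matrixP => i.
    rewrite row0; apply/eqP; apply: contrapT => hne; apply: hh; exists i.
    exact/negP.
  set r := row i (kermx Vm) in ri.
  have rV : r *m Vm = 0 by rewrite /r -row_mul mulmx_ker row0.
  have hs : \sum_j r 0 j *: V j = 0.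
    rewrite -[RHS]rV mulmx_sum_row; apply: eq_bigr => j _; congr (_ *: _).
    by apply/rowP => k; rewrite !mxE.
  have hz := eig_free ilam (fun j => (hV j).1) hcl hs.
  by apply/negP: ri; apply/negPn/eqP/rowP => j; rewrite [RHS]mxE; exact: hz.
have [j hj] := good.
exists (fun x => eps j *: K x + f x); split; [|split].
- exact: frame_of_indep.
- exact: Tg.
- by rewrite dist lte_fin; exact: small.
Qed.

End Scal.

Section RealInst.
Context (R : realType).
Local Notation F := (realF R).

Lemma rF_reD (a b : F) : sc_re (a + b) = sc_re a + sc_re b. Proof. by []. Qed.
Lemma rF_imD (a b : F) : sc_im (a + b) = sc_im a + sc_im b.
Proof. by rewrite /= addr0. Qed.
Lemma rF_reM (a b : F) : sc_re (a * b) = sc_re a * sc_re b - sc_im a * sc_im b.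
Proof. by rewrite /= mulr0 subr0. Qed.
Lemma rF_imM (a b : F) : sc_im (a * b) = sc_re a * sc_im b + sc_im a * sc_re b.
Proof. by rewrite /= mulr0 mul0r addr0. Qed.
Lemma rF_reC (a : F) : sc_re (sc_conj a) = sc_re a. Proof. by []. Qed.
Lemma rF_imC (a : F) : sc_im (sc_conj a) = - sc_im a. Proof. by rewrite /= oppr0. Qed.
Lemma rF_eqF (a b : F) : sc_re a = sc_re b -> sc_im a = sc_im b -> a = b.
Proof. by []. Qed.
Lemma rF_re_ofR (r : R) : sc_re ((id : R -> F) r) = r. Proof. by []. Qed.
Lemma rF_im_ofR (r : R) : sc_im ((id : R -> F) r) = 0. Proof. by []. Qed.

Lemma rF_abs2_vdot n (v y : 'rV[F]_n) : abs2 (vdot v y) = rdot v y ^+ 2.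
Proof. by rewrite /abs2 /= expr0n /= addr0. Qed.

Lemma rF_coord n (w : 'rV[R]_(n + n)) : w != 0 ->
  exists v : 'rV[F]_n, v != 0 /\ forall y : 'rV[F]_n,
    abs2 (vdot v y) <= rdot w (rco y) ^+ 2 + rdot w (ps2 y) ^+ 2.
Proof.
move=> wn0.
have e1 : forall y : 'rV[F]_n, rdot w (rco y) = rdot (lsubmx w) y.
  move=> y; rewrite -[w in LHS]hsubmxK /rco rdot_row_mx.
  rewrite [X in _ + X]big1 ?addr0; last by move=> i _; rewrite !mxE mulr0.
  by apply: eq_bigr => i _; rewrite !mxE.
have e2 : forall y : 'rV[F]_n, rdot w (ps2 y) = rdot (rsubmx w) y.
  move=> y; rewrite -[w in LHS]hsubmxK /ps2 rdot_row_mx.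
  rewrite [X in X + _]big1 ?add0r; last by move=> i _; rewrite !mxE oppr0 mulr0.
  by apply: eq_bigr => i _; rewrite !mxE.
have [a0|an0] := eqVneq (lsubmx w) 0.
  exists (rsubmx w); split.
    apply: contra wn0 => /eqP b0; apply/eqP.
    by rewrite -[w]hsubmxK a0 b0 row_mx0.
  by move=> y; rewrite rF_abs2_vdot e1 e2 lerDr sqr_ge0.
exists (lsubmx w); split => //.
by move=> y; rewrite rF_abs2_vdot e1 e2 lerDl sqr_ge0.
Qed.

End RealInst.

Section ComplexInst.
Context (R : realType).
Local Notation F := (complexF R).
Definition cofR (r : R) : F := (r%:C)%C.

Lemma cF_reD (a b : F) : sc_re (a + b) = sc_re a + sc_re b.
Proof. by case: a => ? ?; case: b. Qed.
Lemma cF_imD (a b : F) : sc_im (a + b) = sc_im a + sc_im b.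
Proof. by case: a => ? ?; case: b. Qed.
Lemma cF_reM (a b : F) : sc_re (a * b) = sc_re a * sc_re b - sc_im a * sc_im b.
Proof. by case: a => ? ?; case: b. Qed.
Lemma cF_imM (a b : F) : sc_im (a * b) = sc_re a * sc_im b + sc_im a * sc_re b.
Proof. by case: a => ? ?; case: b => ? ? /=; rewrite addrC. Qed.
Lemma cF_reC (a : F) : sc_re (sc_conj a) = sc_re a. Proof. by case: a. Qed.
Lemma cF_imC (a : F) : sc_im (sc_conj a) = - sc_im a. Proof. by case: a. Qed.
Lemma cF_eqF (a b : F) : sc_re a = sc_re b -> sc_im a = sc_im b -> a = b.
Proof. by case: a => ? ?; case: b => ? ? /= -> ->. Qed.
Lemma cF_re_ofR (r : R) : sc_re (cofR r) = r. Proof. by []. Qed.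
Lemma cF_im_ofR (r : R) : sc_im (cofR r) = 0. Proof. by []. Qed.

Lemma cF_coord n (w : 'rV[R]_(n + n)) : w != 0 ->
  exists v : 'rV[F]_n, v != 0 /\ forall y : 'rV[F]_n,
    abs2 (vdot v y) <= rdot w (rco y) ^+ 2 + rdot w (ps2 y) ^+ 2.
Proof.
move=> wn0.
pose v : 'rV[F]_n := \row_i ((lsubmx w 0 i +i* rsubmx w 0 i)%C : F).
have rv : rco v = w.
  rewrite /rco -[RHS]hsubmxK; congr row_mx; apply/rowP => i; by rewrite !mxE.
exists v; split.
  apply: contra wn0 => /eqP v0; apply/eqP; rewrite -rv v0.
  apply/rowP => j; rewrite /rco !mxE; case: (fintype.split j) => k; by rewrite !mxE.
move=> y; rewrite (abs2_vdot cF_reD cF_imD cF_reM cF_imM cF_reC cF_imC) rv.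
exact: lexx.
Qed.

End ComplexInst.

Theorem corollary6p1 (R : realType) :
  corollary6p1_for (realF R) /\ corollary6p1_for (complexF R).
Proof.
split => d X mu n T h1 h2 h3 h4 c cn0.
- exact: (@main_generic R (realF R) id (@rF_reD R) (@rF_imD R) (@rF_reM R)
    (@rF_imM R) (@rF_reC R) (@rF_imC R) (@rF_eqF R) (@rF_re_ofR R)
    (@rF_im_ofR R) d X mu (@rF_coord R) n T h1 h2 h3 h4 c cn0).
- exact: (@main_generic R (complexF R) (@cofR R) (@cF_reD R) (@cF_imD R)
    (@cF_reM R) (@cF_imM R) (@cF_reC R) (@cF_imC R) (@cF_eqF R)
    (@cF_re_ofR R) (@cF_im_ofR R) d X mu (@cF_coord R) n T h1 h2 h3 h4 c cn0).
Qed.
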